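(* There is a universal constant $C>0$ such that for any real numbers $\{c_{ij}: 1\le i,j\le 4\}$, $$\min_{S}\sum_{1\le i,j\le 4}c_{ij}S_{u_i}S_{v_j}\le -C\sum_{1\le i,j\le 4}|c_{ij}|,$$ where the minimum is over all assignments $S=(S_{u_1},\dots,S_{u_4},S_{v_1},\dots,S_{v_4})\in\{-1,1\}^8$. In particular, this holds for some $C>\frac{\ln(1+\sqrt{2})}{\pi}$.
   Context: Here $u_1,\dots,u_4$ and $v_1,\dots,v_4$ are the two sides of the complete bipartite graph $K_{4,4}$, with edge set $\{u_1,\dots,u_4\}\times\{v_1,\dots,v_4\}$ and coefficient $c_{ij}$ on edge $(u_i,v_j)$. *)

(* Defs.v *)
From HB Require Import structures.
From mathcomp Require Import all_boot all_order all_algebra.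
From mathcomp Require Import all_classical all_reals all_analysis.
Set Implicit Arguments. Unset Strict Implicit. Unset Printing Implicit Defensive.
Import Order.TTheory GRing.Theory Num.Theory.
Local Open Scope ring_scope.

Definition spin (R : ringType) (b : bool) : R := if b then 1 else -1.

(* An assignment S = (S_{u_1..u_4}, S_{v_1..v_4}) in {-1,1}^8, encoded by booleans. *)
Definition assignment := ({ffun 'I_4 -> bool} * {ffun 'I_4 -> bool})%type.

Definition energy (R : realType) (c : 'I_4 -> 'I_4 -> R) (S : assignment) : R :=
  \sum_(i < 4) \sum_(j < 4) c i j * spin R (S.1 i) * spin R (S.2 j).

Definition all_plus : assignment := ([ffun _ => true], [ffun _ => true]).

Definition min_energy (R : realType) (c : 'I_4 -> 'I_4 -> R) : R :=
  \big[Num.min/energy c all_plus]_(S : assignment) energy c S.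

(* Main.v *)
Require Import Defs.
From HB Require Import structures.
From mathcomp Require Import all_boot all_order all_algebra.
From mathcomp Require Import all_classical all_reals all_analysis.
From mathcomp Require Import ring lra.
Import Order.TTheory GRing.Theory Num.Theory.
Import numFieldNormedType.Exports.
Local Open Scope ring_scope.
Set Implicit Arguments. Unset Strict Implicit.
Definition xf (b1 b2 b3 : bool) : {ffun 'I_4 -> bool} :=
  [ffun i : 'I_4 => nth true [:: true; b1; b2; b3] i].
Definition T8 (R : realType) (f : 'I_4 -> R) : R :=
  `|\sum_i f i * spin R (xf true true true i)| +
  `|\sum_i f i * spin R (xf true true false i)| +
  `|\sum_i f i * spin R (xf true false true i)| +
  `|\sum_i f i * spin R (xf true false false i)| +
  `|\sum_i f i * spin R (xf false true true i)| +
  `|\sum_i f i * spin R (xf false true false i)| +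
  `|\sum_i f i * spin R (xf false false true i)| +
  `|\sum_i f i * spin R (xf false false false i)|.
Lemma ab (R : realType) (x : R) : x <= `|x| /\ - x <= `|x|.
Proof. by rewrite ler_norm -normrN ler_norm. Qed.

Lemma col (R : realType) (f : 'I_4 -> R) : 3 * \sum_i `|f i| <= T8 f.
Proof.
rewrite /T8 !big_ord_recr !big_ord0 /= /xf !ffunE /= /spin !mulr1 !mulrN1 !add0r.
set a := f _; set b := f _; set c := f _; set d := f _.
have Ha := (normr_ge0 a); have Hb := (normr_ge0 b); have Hc := (normr_ge0 c); have Hd := (normr_ge0 d).
case: (lerP 0 a) => ha; [rewrite (ger0_norm ha) | rewrite (ltr0_norm ha)];
case: (lerP 0 b) => hb; try rewrite (ger0_norm hb); try rewrite (ltr0_norm hb);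
case: (lerP 0 c) => hc; try rewrite (ger0_norm hc); try rewrite (ltr0_norm hc);
case: (lerP 0 d) => hd; try rewrite (ger0_norm hd); try rewrite (ltr0_norm hd);
repeat match goal with |- context [`|?x|] =>
  let h1 := fresh in let h2 := fresh in let y := fresh "y" in
  have [h1 h2] := ab x; set y := `|x| in h1 h2 *; clearbody y end.
all: lra.
Qed.

Lemma key (R : realType) (c : 'I_4 -> 'I_4 -> R) (x : {ffun 'I_4 -> bool}) :
  min_energy c <= - \sum_(j < 4) `|\sum_(i < 4) c i j * spin R (x i)|.
Proof.
pose y := [ffun j : 'I_4 => (\sum_(i < 4) c i j * spin R (x i)) < 0].
apply: (@le_trans _ _ (energy c (x, y))).
  by rewrite /min_energy (bigD1 (x, y)) //= ge_min lexx.
rewrite /energy /= exchange_big /= -sumrN; apply: ler_sum => j _.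
rewrite /y ffunE.
rewrite -mulr_suml.
set b := \sum_(i < 4) c i j * spin R (x i).
rewrite /spin; case: ltrP => hb.
  by rewrite mulr1 (ltr0_norm hb) opprK.
by rewrite mulrN1 (ger0_norm hb).
Qed.

Lemma sin_cont (R : realType) (x : R) : {within `[0, x]%classic, continuous (@sin R)}%classic.
Proof. by apply/continuous_subspaceT => ?; exact: continuous_sin. Qed.
Set Implicit Arguments. Unset Strict Implicit.

Lemma sin_le (R : realType) (x : R) : 0 < x -> sin x <= x.
Proof.
move=> x0.
have hd : forall z, z \in `]0, x[ -> is_derive z 1 (@sin R) (cos z).
  by move=> z _; apply: is_derive_sin.
have [z _] := @MVT R sin cos 0 x x0 hd (@sin_cont R x).
rewrite sin0 !subr0 => ->.
by have := cos_le1 z; nra.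
Qed.

Lemma pi2_ge8 (R : realType) : 8 <= (pi : R) ^+ 2.
Proof.
have hs : sin (pi / 4 : R) = cos (pi / 4).
  rewrite {1}(_ : (pi / 4 : R) = pi / 2 - pi / 4); last by field.
  by rewrite sinB sin_pihalf cos_pihalf mul1r mul0r subr0.
set s := sin (pi / 4 : R).
have h2 := cos2Dsin2 (pi / 4 : R).
have hpos : 0 < s.
  apply: sin_gt0_pihalf; have := pi_gt0 R; move=> p; apply/andP; split; lra.
have hle : s <= pi / 4 by apply: sin_le; have := pi_gt0 R; lra.
rewrite -hs in h2.
have p := pi_gt0 R.
have h3 : s * s <= (pi / 4) * (pi / 4) by apply: ler_pM; lra.
have h4 : (pi / 4) * (pi / 4) = (pi : R) ^+ 2 / 16 by field.
rewrite h4 -expr2 in h3; rewrite -/s in h2.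
lra.
Qed.

Lemma ln_lt1 (R : realType) : ln (1 + Num.sqrt 2) < (1 : R).
Proof.
have s0 : 0 <= Num.sqrt (2 : R) := sqrtr_ge0 _.
have s2 : Num.sqrt (2 : R) ^+ 2 = 2 by rewrite sqr_sqrtr // ler0n.
have e1 : (5/4 : R) ^+ 4 <= expR 1.
  have -> : (1 : R) = 4%:R * (1/4) by field.
  rewrite expRM_natl; apply: lerXn2r; rewrite ?nnegrE; try lra.
  - by have := expR_gt0 (1/4 : R); lra.
  - by have := expR_ge1Dx (1/4 : R); lra.
rewrite -ltr_expR lnK; last by rewrite posrE; lra.
apply: (lt_le_trans _ e1); nra.
Qed.

Theorem lemma2 (R : realType) :
  exists C : R, 0 < C /\ ln (1 + Num.sqrt 2) / pi < C /\
    forall c : 'I_4 -> 'I_4 -> R,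
      min_energy c <= - C * \sum_(i < 4) \sum_(j < 4) `|c i j|.
Proof.
exists (3/8); split; first lra.
split.
  have p := pi_gt0 R; have p8 := pi2_ge8 R; have l1 := ln_lt1 R.
  have p28 : 28/10 < (pi : R) by rewrite expr2 in p8; nra.
  by rewrite ltr_pdivrMr //; lra.
move=> c.
have k1 := key c (xf true true true).
have k2 := key c (xf true true false).
have k3 := key c (xf true false true).
have k4 := key c (xf true false false).
have k5 := key c (xf false true true).
have k6 := key c (xf false true false).
have k7 := key c (xf false false true).
have k8 := key c (xf false false false).
have HT : 3 * \sum_(j < 4) \sum_(i < 4) `|c i j| <= \sum_(j < 4) T8 (fun i => c i j).
  by rewrite mulr_sumr; apply: ler_sum => j _; apply: col.
rewrite /T8 /= !big_split /= in HT.
rewrite exchange_big /=.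
lra.
Qed.
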